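(* Let the valuations of all bidders in $\mathcal B_i$ be gross substitute and let $r\ge0$. Then for every $S\subseteq\Omega$ with $R_{i,r}(S)\ne-1$, the virtual-auction prices $p^S$ of the EF-mediator $\mathcal M_i$ equal $p^\Omega$ on all items of $\Omega$.
   Context: $\Omega$ is a finite set of items; price vectors $p\in\mathbb{R}^\Omega_{\ge0}$, $p(S)=\sum_{j\in S}p_j$, comparisons item-wise. Bidders have monotone valuations $v_b:2^\Omega\to\mathbb{R}$, $v_b(\emptyset)=0$; $D_b(p)$ is the set of $S\subseteq\Omega$ maximizing $v_b(S)-p(S)$. Gross substitute: for all $p^{(2)}\ge p^{(1)}\ge0$ and every $D^{(1)}\in D(p^{(1)})$ there is $D^{(2)}\in D(p^{(2)})$ containing every $j\in D^{(1)}$ with $p^{(1)}_j=p^{(2)}_j$. An allocation of $T$ to $\mathcal B_i$ is a family of pairwise disjoint subsets $\langle T_b\rangle$ of $T$; envy free on $T$ at $p$ means each $T_b$ maximizes $v_b(\cdot)-p(\cdot)$ over subsets of $T$. EF-mediator $\mathcal M_i$ with bidders $\mathcal B_i$, at reserve prices $r\ge0$: for each $S\subseteq\Omega$ the virtual auction computes a minimal (no item-wise smaller vector has the property) price vector $p^S\ge r$ envy free on $S$ for $\mathcal B_i$, with an envy-free allocation $\langle S_b\rangle$ of $S$ at $p^S$ maximizing $\sum_b p^S(S_b)$; then $p^S_j:=r_j$ for $j\notin S$. Revenue $R_{i,r}(S)=\sum_b p^S(S_b)-r(S)$ if $S_b\in D_b(p^S)$ for all $b\in\mathcal B_i$, and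 $R_{i,r}(S)=-1$ otherwise. *)

(* Defs.v *)
From HB Require Import structures.
From mathcomp Require Import all_boot all_order all_algebra.
From mathcomp Require Import reals.
Set Implicit Arguments. Unset Strict Implicit. Unset Printing Implicit Defensive.
Import Order.TTheory GRing.Theory Num.Theory.
Local Open Scope ring_scope.

Section Auction.
Variables (R : realType) (Omega B : finType).

Definition price (p : Omega -> R) (S : {set Omega}) : R := \sum_(j in S) p j.

Definition utility (v : {set Omega} -> R) (p : Omega -> R) (S : {set Omega}) : R :=
  v S - price p S.

Definition in_demand (v : {set Omega} -> R) (p : Omega -> R) (S : {set Omega}) : bool :=
  [forall X : {set Omega}, utility v p X <= utility v p S].

Definition valuation (v : {set Omega} -> R) : Prop :=
  v set0 = 0 /\ (forall S T : {set Omega}, S \subset T -> v S <= v T).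

Definition gross_substitute (v : {set Omega} -> R) : Prop :=
  forall p1 p2 : Omega -> R,
    (forall j, 0 <= p1 j) -> (forall j, p1 j <= p2 j) ->
    forall D1, in_demand v p1 D1 ->
    exists D2, in_demand v p2 D2 /\
      (forall j, j \in D1 -> p1 j = p2 j -> j \in D2).

Definition allocation (T : {set Omega}) (a : B -> {set Omega}) : Prop :=
  (forall b, a b \subset T) /\
  (forall b b', b != b' -> [disjoint a b & a b']).

Definition envy_free_alloc (v : B -> {set Omega} -> R) (T : {set Omega})
    (p : Omega -> R) (a : B -> {set Omega}) : Prop :=
  allocation T a /\
  (forall b (X : {set Omega}), X \subset T -> utility (v b) p X <= utility (v b) p (a b)).

Definition ef_prices (v : B -> {set Omega} -> R) (T : {set Omega})
    (r p : Omega -> R) : Prop :=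
  (forall j, r j <= p j) /\ exists a, envy_free_alloc v T p a.

Definition minimal_ef_prices (v : B -> {set Omega} -> R) (T : {set Omega})
    (r p : Omega -> R) : Prop :=
  ef_prices v T r p /\
  forall q : Omega -> R, ef_prices v T r q -> (forall j, q j <= p j) ->
    forall j, q j = p j.

Definition alloc_revenue (p : Omega -> R) (a : B -> {set Omega}) : R :=
  \sum_(b : B) price p (a b).

(* A possible outcome (p0, a) of the virtual auction on S at reserve r:
   p0 is a minimal envy-free price vector >= r on S, and a is an envy-free
   allocation of S at p0 maximizing sum_b p0(S_b). *)
Definition virtual_auction (v : B -> {set Omega} -> R) (r : Omega -> R)
    (S : {set Omega}) (p0 : Omega -> R) (a : B -> {set Omega}) : Prop :=
  minimal_ef_prices v S r p0 /\ envy_free_alloc v S p0 a /\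
  (forall a', envy_free_alloc v S p0 a' -> alloc_revenue p0 a' <= alloc_revenue p0 a).

Definition final_prices (r : Omega -> R) (S : {set Omega}) (p0 : Omega -> R) :
    Omega -> R := fun j => if j \in S then p0 j else r j.

Definition mediator_revenue (v : B -> {set Omega} -> R) (r : Omega -> R)
    (S : {set Omega}) (p0 : Omega -> R) (a : B -> {set Omega}) : R :=
  let p := final_prices r S p0 in
  if [forall b, in_demand (v b) p (a b)] then alloc_revenue p a - price r S
  else -1.

End Auction.

(* Main.v *)
Require Import Defs.
From HB Require Import structures.
From mathcomp Require Import all_boot all_order all_algebra.
From mathcomp Require Import reals.
From mathcomp Require Import ring lra.
Import Order.TTheory GRing.Theory Num.Theory.
Local Open Scope ring_scope.
Set Implicit Arguments. Unset Strict Implicit.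

Lemma fin_lb (R : realType) (I : finType) (P : pred I) (f : I -> R) :
  (forall i, P i -> 0 < f i) -> exists2 g, 0 < g & forall i, P i -> g <= f i.
Proof.
move=> Hf.
suff: forall s : seq I, exists2 g, 0 < g & forall i, i \in s -> P i -> g <= f i.
  by case/(_ (enum I)) => g g0 Hg; exists g => // i Pi; apply: Hg; rewrite ?mem_enum.
elim=> [|x s [g g0 Hg]]; first by exists 1.
case Px: (P x).
- exists (Order.min g (f x)); first by rewrite lt_min g0 Hf.
  move=> i; rewrite inE => /orP[/eqP->|iS] Pi; first by rewrite ge_min lexx orbT.
  by rewrite ge_min Hg.
- exists g => // i; rewrite inE => /orP[/eqP->|iS] Pi; first by rewrite Px in Pi.
  exact: Hg.
Qed.

Lemma demand_ex (R : realType) (Omega : finType) (v : {set Omega} -> R)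
  (p : Omega -> R) : exists D, in_demand v p D.
Proof.
case: (@arg_maxP _ _ _ set0 predT (fun X => utility v p X)) => // D _ HD.
by exists D; apply/forallP => X; apply: HD.
Qed.

Lemma demand_cont (R : realType) (Omega : finType) (v : {set Omega} -> R)
  (p : Omega -> R) : exists2 g, 0 < g & forall p' : Omega -> R,
    (forall j, p j <= p' j <= p j + g) ->
    forall Z, in_demand v p' Z -> in_demand v p Z.
Proof.
have [g0 g00 Hg0] := @fin_lb R _
  (fun XZ : {set Omega} * {set Omega} => utility v p XZ.2 < utility v p XZ.1)
  (fun XZ => utility v p XZ.1 - utility v p XZ.2)
  (fun XZ h => (ltac:(by rewrite subr_gt0))).
set n : R := #|Omega|%:R.
have n0 : 0 <= n by rewrite /n ler0n.
set g := g0 / (n + 1).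
have gdef : g * (n + 1) = g0 by rewrite /g mulfVK // gt_eqF //; lra.
have g0' : 0 < g by rewrite /g divr_gt0 //; lra.
exists g => // p' Hp' Z HZ.
apply/forallP => X; rewrite leNgt; apply/negP => lt.
have H1 := Hg0 (X, Z) lt; rewrite /= in H1.
move/forallP: HZ => /(_ X).
have HZ2 : price p Z <= price p' Z.
  by apply: ler_sum => j _; case/andP: (Hp' j).
have HX2 : price p' X <= price p X + #|X|%:R * g.
  rewrite /price mulr_natl -sumr_const -big_split /=.
  by apply: ler_sum => j _; case/andP: (Hp' j).
have k1 : #|X|%:R <= n by rewrite /n ler_nat max_card.
have k2 : #|X|%:R * g <= n * g by rewrite ler_wpM2r //; lra.
move: H1; rewrite /utility => H1 H2.
nra.
Qed.

Lemma demand_dom (R : realType) (Omega : finType) (v : {set Omega} -> R)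
  (p : Omega -> R) X d : 0 < d -> in_demand v p X ->
  forall Z, in_demand v (fun j => p j + (if j \in X then 0 else d)) Z ->
  Z \subset X.
Proof.
move=> d0 HX Z HZ; apply/subsetP => j jZ; apply/negPn/negP => jX.
move/forallP: HZ => /(_ X); move/forallP: HX => /(_ Z).
rewrite /utility /price !big_split /=.
have -> : \sum_(i in X) (if i \in X then 0 else d) = 0 by rewrite big1 // => i ->.
have : d <= \sum_(i in Z) (if i \in X then 0 else d).
  rewrite (bigD1 j) //= (negbTE jX) lerDl sumr_ge0 // => i _.
  by case: ifP => //; rewrite ltW.
lra.
Qed.

Lemma demand_ext (R : realType) (Omega : finType) (v : {set Omega} -> R)
  (p q : Omega -> R) D : (forall j, p j = q j) ->
  in_demand v p D -> in_demand v q D.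
Proof.
move=> Hpq /forallP H; apply/forallP => X.
have E : forall Y, price p Y = price q Y by move=> Y; apply: eq_bigr.
by move: (H X); rewrite /utility !E.
Qed.

Lemma single (R : realType) (Omega : finType) (v : {set Omega} -> R)
  (P Q : Omega -> R) X Y : gross_substitute v ->
  (forall j, 0 <= P j) -> (forall j, 0 <= Q j) ->
  in_demand v P X -> in_demand v Q Y ->
  exists D, in_demand v (fun j => if P j < Q j then P j else Q j) D /\
    forall j, j \in D -> (if P j < Q j then j \in X else j \in Y).
Proof.
move=> GS P0 Q0 HX HY.
set m := fun j => if P j < Q j then P j else Q j.
have [gm gm0 Hgm] := demand_cont v m.
have [gpq gpq0 Hgpq] := @fin_lb R _ (fun j => P j < Q j) (fun j => Q j - P j)
  (fun j h => (ltac:(by rewrite subr_gt0))).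
set d := Order.min gm gpq / 2.
have dm : Order.min gm gpq <= gm by rewrite ge_min lexx.
have dpq : Order.min gm gpq <= gpq by rewrite ge_min lexx orbT.
have d0' : 0 < Order.min gm gpq by rewrite lt_min gm0 gpq0.
have d0 : 0 < d by rewrite /d; lra.
have d2 : d * 2 = Order.min gm gpq by rewrite /d; field.
set P2 := fun j => P j + (if j \in X then 0 else d).
have [gp2 gp20 Hgp2] := demand_cont v P2.
set e := Order.min d gp2.
have ed : e <= d by rewrite ge_min lexx.
have eg : e <= gp2 by rewrite ge_min lexx orbT.
have e0 : 0 < e by rewrite lt_min d0 gp20.
set P1 := fun j => P2 j + e.
set Q1 := fun j => Q j + (if j \in Y then 0 else e / 2).
set m1 := fun j => if P j < Q j then P1 j else Q1 j.
have [D HD] := demand_ex v m1.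
have facts : forall j, [/\ 0 <= m1 j, m1 j <= P1 j, m1 j <= Q1 j &
                        m j <= m1 j <= m j + gm].
  move=> j; have := P0 j; have := Q0 j.
  rewrite /m1 /m /P1 /P2 /Q1; case: ltP => h.
  - have := Hgpq j h => hg.
    case: (j \in X); case: (j \in Y) => *;
      (split; [lra|lra|lra|apply/andP; split; lra]).
  - case: (j \in X); case: (j \in Y) => *;
      (split; [lra|lra|lra|apply/andP; split; lra]).
exists D; split.
  apply: (Hgm m1) => // j; by case: (facts j).
move=> j jD; case: ifP => PQ.
- have [D2 [HD2 sub]] := GS m1 P1 (fun j => (let: And4 a _ _ _ := facts j in a))
    (fun j => (let: And4 _ a _ _ := facts j in a)) D HD.
  have jD2 : j \in D2 by apply: sub; rewrite // /m1 PQ.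
  have HD2' : in_demand v P2 D2.
    apply: (Hgp2 P1) => // i; rewrite /P1; apply/andP; split; lra.
  by have /subsetP := demand_dom d0 HX HD2'; apply.
- have [D1 [HD1 sub]] := GS m1 Q1 (fun j => (let: And4 a _ _ _ := facts j in a))
    (fun j => (let: And4 _ _ a _ := facts j in a)) D HD.
  have jD1 : j \in D1 by apply: sub; rewrite // /m1 PQ.
  have e20 : 0 < e / 2 by lra.
  by have /subsetP := demand_dom e20 HY HD1; apply.
Qed.

Lemma meet_alloc (R : realType) (Omega B : finType)
  (v : B -> {set Omega} -> R) (P Q : Omega -> R) (a c : B -> {set Omega}) :
  (forall b, gross_substitute (v b)) ->
  (forall j, 0 <= P j) -> (forall j, 0 <= Q j) ->
  (forall b b', b != b' -> [disjoint a b & a b']) ->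
  (forall b b', b != b' -> [disjoint c b & c b']) ->
  (forall b, in_demand (v b) P (a b)) -> (forall b, in_demand (v b) Q (c b)) ->
  exists z : B -> {set Omega},
    [/\ (forall b b', b != b' -> [disjoint z b & z b']),
        (forall b, in_demand (v b) (fun j => if P j < Q j then P j else Q j) (z b)) &
        (forall b j, j \in z b -> if P j < Q j then j \in a b else j \in c b)].
Proof.
move=> GS P0 Q0 Da Dc Ha Hc.
pose prop b (D : {set Omega}) :=
  in_demand (v b) (fun j => if P j < Q j then P j else Q j) D &&
  [forall j, (j \in D) ==> (if P j < Q j then j \in a b else j \in c b)].
have Hz : forall b, prop b (odflt set0 [pick D | prop b D]).
  move=> b; case: pickP => //= /(_ _) H.
  have [D [HD1 HD2]] := single (GS b) P0 Q0 (Ha b) (Hc b).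
  by move: (H D); rewrite /prop HD1 /=; move/negP; case; apply/forallP => j;
    apply/implyP; apply: HD2.
exists (fun b => odflt set0 [pick D | prop b D]); split.
- move=> b b' bb'; apply/pred0P => j /=; apply/negP => /andP[j1 j2].
  have [_ /forallP/(_ j)/implyP/(_ j1) h1] := andP (Hz b).
  have [_ /forallP/(_ j)/implyP/(_ j2) h2] := andP (Hz b').
  move: h1 h2; case: ifP => _ h1 h2.
  + by move: (Da _ _ bb') => /disjointFr/(_ h1); rewrite h2.
  + by move: (Dc _ _ bb') => /disjointFr/(_ h1); rewrite h2.
- by move=> b; case/andP: (Hz b).
- by move=> b j jz; case/andP: (Hz b) => _ /forallP/(_ j)/implyP; apply.
Qed.

Unset Implicit Arguments.

Theorem corollary1 (R : realType) (Omega B : finType)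
    (v : B -> {set Omega} -> R) (r : Omega -> R) :
  (forall b, valuation (v b)) ->
  (forall b, gross_substitute (v b)) ->
  (forall j, 0 <= r j) ->
  forall (S : {set Omega}) (pS : Omega -> R) (aS : B -> {set Omega})
         (pO : Omega -> R) (aO : B -> {set Omega}),
    virtual_auction v r S pS aS ->
    virtual_auction v r [set: Omega] pO aO ->
    mediator_revenue v r S pS aS != -1 ->
    forall j : Omega, final_prices r S pS j = final_prices r [set: Omega] pO j.
Proof.
move=> Hval GS r0 S pS aS pO aO [[[pSr _] minS] [[[aSS aSD] _] _]]
  [[[pOr _] minO] [[[_ aOD] efO] _]] Hrev.
move: Hrev; rewrite /mediator_revenue; case: ifP => [Hdem _|_]; last by rewrite eqxx.
set p := final_prices r S pS in Hdem *.
have pr : forall j, r j <= p j by move=> j; rewrite /p /final_prices; case: ifP.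
have p0 : forall j, 0 <= p j by move=> j; apply: le_trans (pr j).
have pO0 : forall j, 0 <= pO j by move=> j; apply: le_trans (pOr j).
have HaO : forall b, in_demand (v b) pO (aO b).
  by move=> b; apply/forallP => X; apply: efO; apply: subsetT.
have HaS : forall b, in_demand (v b) p (aS b) by move=> b; move/forallP: Hdem.
have [z [zD zH _]] := meet_alloc GS p0 pO0 aSD aOD HaS HaO.
have mO := minO (fun j => if p j < pO j then p j else pO j).
have pOp : forall j, pO j <= p j.
  move=> j.
  have ef : ef_prices v [set: Omega] r
      (fun j => if p j < pO j then p j else pO j).
    split; first by move=> i; case: ltP => _; [apply: pr | apply: pOr].
    exists z; split; first by split => // b; apply: subsetT.
    by move=> b X _; move/forallP: (zH b).
  have le : forall i, (if p i < pO i then p i else pO i) <= pO i.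
    by move=> i; case: ltP => // /ltW.
  have := mO ef le j.
  by case: ltP => // h e; rewrite e ltxx in h.
have [z2 [z2D z2H z2S]] := meet_alloc GS pO0 p0 aOD aSD HaO HaS.
have m2E : forall j, (if pO j < p j then pO j else p j) = pO j.
  by move=> j; case: ltP => // h; apply/le_anti; rewrite h pOp.
have z2sub : forall b, z2 b \subset S.
  move=> b; apply/subsetP => j jz; move: (z2S b j jz).
  case: (boolP (j \in S)) => // jS.
  have pj : p j = r j by rewrite /p /final_prices (negbTE jS).
  case: ltP => h; first by move: h; rewrite pj => h; have := pOr j; lra.
  by move=> h2; rewrite (subsetP (aSS b) j h2) in jS.
have eqS := minS pO.
have pOpS : forall j, pO j = pS j.
  apply: eqS.
  - split => //; exists z2; split; first by split.
    move=> b X XS; have := demand_ext m2E (z2H b).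
    by move/forallP/(_ X).
  - move=> j; case: (boolP (j \in S)) => jS.
    + by have := pOp j; rewrite /p /final_prices jS.
    + by have := pOp j; rewrite /p /final_prices (negbTE jS) => h;
        apply: le_trans h (pSr j).
move=> j; rewrite /p /final_prices in_setT; case: ifP => jS; first by rewrite pOpS.
apply/le_anti; apply/andP; split; first exact: pOr.
by have := pOp j; rewrite /p /final_prices jS.
Qed.
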